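(* Let $n_0\ge2$ be an integer, $s\in\mathbb{C}$ with $\sigma=\operatorname{Re}s>2$, and $\mathcal{D}_{n_0}\in\{\mathcal{X}_{n_0},\mathcal{Y}_{n_0},\mathcal{Z}_{n_0}\}$. Then $$|\mathcal{D}_{n_0}(s)|\le\frac{2(n_0-1)^{2-\sigma}}{\sigma-2}.$$
   Context: Pascal's rhombus consists of integers $r_{i,j}$ for $i\ge0$, $j\in\mathbb{Z}$, with $r_{0,j}=0$ for all $j$, $r_{1,0}=1$, $r_{1,j}=0$ for $j\ne0$, and $r_{i,j}=r_{i-1,j-1}+r_{i-1,j}+r_{i-1,j+1}+r_{i-2,j}$ for $i\ge2$. For $n\ge1$: $x(n)$ is the number of $j$ with $r_{n,j}$ odd; $y(n)$ the number of $j$ with $r_{2n-1,2j}$ odd; $z(n)$ the number of $j$ with $r_{2n,2j-1}$ odd. $\mathcal{X}_{n_0}(s)=\sum_{n\ge n_0}x(n)n^{-s}$, $\mathcal{Y}_{n_0}(s)=\sum_{n\ge n_0}y(n)n^{-s}$, $\mathcal{Z}_{n_0}(s)=\sum_{n\ge n_0}z(n)n^{-s}$. *)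

(* Defs.v *)
From Stdlib Require Import Reals ZArith List Lia.
From Coquelicot Require Import Coquelicot.
Import ListNotations.
Open Scope R_scope.

(* Pascal's rhombus r_{i,j}, i : nat, j : Z. *)
Fixpoint rh (i : nat) (j : Z) : Z :=
  match i with
  | O => 0%Z
  | S O => if Z.eqb j 0 then 1%Z else 0%Z
  | S ((S k) as i1) => (rh i1 (j - 1) + rh i1 j + rh i1 (j + 1) + rh k j)%Z
  end.

(* Support lemma: r_{i,j} = 0 whenever |j| > i; hence counting odd entries
   over a window containing [-i, i] counts all of them. *)
Lemma rh_support : forall i j, (Z.of_nat i < Z.abs j)%Z -> rh i j = 0%Z.
Proof.
  assert (H : forall i, (forall j, (Z.of_nat i < Z.abs j)%Z -> rh i j = 0%Z) /\
                        (forall j, (Z.of_nat (S i) < Z.abs j)%Z -> rh (S i) j = 0%Z)).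
  { induction i as [|i [IH1 IH2]].
    - split; intros j Hj; simpl; [reflexivity|].
      destruct (Z.eqb_spec j 0); [subst; simpl in Hj; lia | reflexivity].
    - split; [exact IH2|]. intros j Hj.
      change (rh (S (S i)) j) with
        (rh (S i) (j - 1) + rh (S i) j + rh (S i) (j + 1) + rh i j)%Z.
      rewrite !IH2 by lia. rewrite IH1 by lia. reflexivity. }
  intros i j Hj. exact (proj1 (H i) j Hj).
Qed.

Definition zrange (a b : Z) : list Z :=
  map (fun k => (a + Z.of_nat k)%Z) (seq 0 (Z.to_nat (b - a + 1))).

Definition zcount (f : Z -> bool) (a b : Z) : nat :=
  length (filter f (zrange a b)).

(* x(n) = #{j : r_{n,j} odd}; support of r_n is within [-n, n] *)
Definition xcnt (n : nat) : nat :=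
  zcount (fun j => Z.odd (rh n j)) (- Z.of_nat n) (Z.of_nat n).
(* y(n) = #{j : r_{2n-1,2j} odd}; |2j| <= 2n-1 forces j in [-n, n] *)
Definition ycnt (n : nat) : nat :=
  zcount (fun j => Z.odd (rh (2 * n - 1) (2 * j))) (- Z.of_nat n) (Z.of_nat n).
(* z(n) = #{j : r_{2n,2j-1} odd}; |2j-1| <= 2n forces j in [-n, n+1] *)
Definition zcnt (n : nat) : nat :=
  zcount (fun j => Z.odd (rh (2 * n) (2 * j - 1))) (- Z.of_nat n) (Z.of_nat n + 1).

(* n^{-s} = exp(-s ln n) for a positive integer n and complex s = sigma + i t:
   n^{-sigma} (cos (t ln n) - i sin (t ln n)). *)
Definition npow_neg (n : nat) (s : C) : C :=
  (exp (- Re s * ln (INR n)) * cos (Im s * ln (INR n)),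
   - (exp (- Re s * ln (INR n)) * sin (Im s * ln (INR n)))).

(* general term of the Dirichlet series sum_{n >= n0} D(n) n^{-s}, reindexed n = n0 + k *)
Definition dterm (D : nat -> nat) (n0 : nat) (s : C) (k : nat) : C :=
  Cmult (RtoC (INR (D (n0 + k)%nat))) (npow_neg (n0 + k) s).

(* Main.v *)
Require Import Defs.
From Stdlib Require Import Reals ZArith List Lia Lra.
From Coquelicot Require Import Coquelicot.
Open Scope R_scope.

Lemma rh_support2 : forall i j, (Z.of_nat i <= Z.abs j)%Z -> rh i j = 0%Z.
Proof.
  assert (H : forall i, (forall j, (Z.of_nat i <= Z.abs j)%Z -> rh i j = 0%Z) /\
                        (forall j, (Z.of_nat (S i) <= Z.abs j)%Z -> rh (S i) j = 0%Z)).
  { induction i as [|i [IH1 IH2]].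
    - split; intros j Hj; simpl; [reflexivity|].
      destruct (Z.eqb_spec j 0); [subst; simpl in Hj; lia | reflexivity].
    - split; [exact IH2|]. intros j Hj.
      change (rh (S (S i)) j) with
        (rh (S i) (j - 1) + rh (S i) j + rh (S i) (j + 1) + rh i j)%Z.
      rewrite !IH2 by lia. rewrite IH1 by lia. reflexivity. }
  intros i j Hj. exact (proj1 (H i) j Hj).
Qed.

Lemma odd_nz : forall i j, Z.odd (rh i j) = true -> (Z.abs j < Z.of_nat i)%Z.
Proof.
  intros i j H. destruct (Z_lt_le_dec (Z.abs j) (Z.of_nat i)) as [h|h]; auto.
  rewrite rh_support2 in H by exact h. discriminate.
Qed.

Lemma In_zrange : forall a b j, In j (zrange a b) -> (a <= j <= b)%Z.
Proof.
  intros a b j H. unfold zrange in H. apply in_map_iff in H.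
  destruct H as [k [Hk Hin]]. apply in_seq in Hin. lia.
Qed.

Lemma In_zrange2 : forall a b j, (a <= j <= b)%Z -> In j (zrange a b).
Proof.
  intros a b j H. unfold zrange. apply in_map_iff.
  exists (Z.to_nat (j - a)). split; [lia|]. apply in_seq. lia.
Qed.

Lemma NoDup_zrange : forall a b, NoDup (zrange a b).
Proof.
  intros a b. unfold zrange. apply NoDup_map_NoDup_ForallPairs.
  - intros x y _ _ H. lia.
  - apply seq_NoDup.
Qed.

Lemma zcount_le : forall f a b a' b',
  (forall j, (a <= j <= b)%Z -> f j = true -> (a' <= j <= b')%Z) ->
  (zcount f a b <= Z.to_nat (b' - a' + 1))%nat.
Proof.
  intros f a b a' b' H. unfold zcount.
  replace (Z.to_nat (b' - a' + 1)) with (length (zrange a' b')).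
  2:{ unfold zrange. rewrite length_map, length_seq. reflexivity. }
  apply NoDup_incl_length.
  - apply NoDup_filter, NoDup_zrange.
  - intros j Hj. apply filter_In in Hj. destruct Hj as [H1 H2].
    apply In_zrange2. apply H; auto. apply In_zrange; auto.
Qed.

Lemma D_le : forall D n, (D = xcnt \/ D = ycnt \/ D = zcnt) -> (1 <= n)%nat ->
  (D n <= 2 * n)%nat.
Proof.
  intros D n HD Hn. destruct HD as [ -> | [ -> | -> ] ].
  - unfold xcnt. eapply Nat.le_trans.
    + apply (zcount_le _ _ _ (- Z.of_nat n + 1) (Z.of_nat n - 1)).
      intros j _ Hj. apply odd_nz in Hj. lia.
    + lia.
  - unfold ycnt. eapply Nat.le_trans.
    + apply (zcount_le _ _ _ (- Z.of_nat n + 1) (Z.of_nat n - 1)).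
      intros j _ Hj. apply odd_nz in Hj. lia.
    + lia.
  - unfold zcnt. eapply Nat.le_trans.
    + apply (zcount_le _ _ _ (- Z.of_nat n + 1) (Z.of_nat n)).
      intros j _ Hj. apply odd_nz in Hj. lia.
    + lia.
Qed.

Lemma Cmod_npow : forall n s, Cmod (npow_neg n s) = exp (- Re s * ln (INR n)).
Proof.
  intros n s. unfold npow_neg, Cmod. simpl.
  set (E := exp (- Re s * ln (INR n))).
  set (t := Im s * ln (INR n)).
  replace (E * cos t * (E * cos t * 1) + - (E * sin t) * (- (E * sin t) * 1)) with (E²)
    by (pose proof (sin2_cos2 t); unfold Rsqr in *; nra).
  apply sqrt_Rsqr. unfold E. left; apply exp_pos.
Qed.

Lemma ln_le_m1 : forall x, 0 < x -> ln x <= x - 1.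
Proof. intros x Hx. pose proof (exp_ineq1_le (ln x)). rewrite exp_ln in H; lra. Qed.

Lemma key : forall a x, 0 < a -> 2 <= x ->
  a * exp (- (a + 1) * ln x) <= exp (- a * ln (x - 1)) - exp (- a * ln x).
Proof.
  intros a x Ha Hx.
  set (E := exp (- a * ln x)).
  assert (HE : 0 < E) by apply exp_pos.
  assert (H1 : exp (- (a + 1) * ln x) = E / x).
  { unfold E. replace (- (a + 1) * ln x) with (- a * ln x + - ln x) by ring.
    rewrite exp_plus, exp_Ropp, exp_ln by lra. field. lra. }
  assert (H2 : exp (- a * ln (x - 1)) = E * exp (a * (ln x - ln (x - 1)))).
  { unfold E. rewrite <- exp_plus. f_equal. ring. }
  assert (H3 : 1 / x <= ln x - ln (x - 1)).
  { assert (Hp : 0 < (x - 1) / x) by (apply Rdiv_lt_0_compat; lra).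
    pose proof (ln_le_m1 ((x - 1) / x) Hp).
    rewrite ln_div in H by lra.
    assert ((x-1)/x - 1 = - (1/x)) by (field; lra). lra. }
  pose proof (exp_ineq1_le (a * (ln x - ln (x - 1)))).
  rewrite H1, H2.
  assert (E * (1 + a * (1/x)) <= E * exp (a * (ln x - ln (x - 1)))).
  { apply Rmult_le_compat_l; [lra|]. assert (a * (1/x) <= a * (ln x - ln (x - 1))).
    apply Rmult_le_compat_l; lra. lra. }
  assert (a * (E / x) = E * (a * (1/x))) by (field; lra). lra.
Qed.

Theorem lemmaI3 (n0 : nat) (s : C) (D : nat -> nat) :
  (2 <= n0)%nat -> 2 < Re s -> (D = xcnt \/ D = ycnt \/ D = zcnt) ->
  exists l : C, is_series (dterm D n0 s) l /\
    Cmod l <= 2 * Rpower (INR (n0 - 1)) (2 - Re s) / (Re s - 2).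
Proof.
  intros Hn0 Hs HD.
  set (a := Re s - 2).
  assert (Ha : 0 < a) by (unfold a; lra).
  set (f := fun x => exp (- a * ln x)).
  set (b := fun k : nat => 2 * exp (- (a + 1) * ln (INR (n0 + k)))).
  set (B := 2 * Rpower (INR (n0 - 1)) (2 - Re s) / (Re s - 2)).
  assert (HB : B = 2 / a * f (INR n0 - 1)).
  { unfold B, f, Rpower. rewrite minus_INR by lia. simpl INR at 2.
    replace (2 - Re s) with (- a) by (unfold a; ring). fold a. field. lra. }
  assert (Hnorm : forall k, norm (dterm D n0 s k) <= b k).
  { intros k. change (Cmod (dterm D n0 s k) <= b k). unfold dterm. rewrite Cmod_mult, Cmod_R, Cmod_npow.
    rewrite Rabs_pos_eq by apply pos_INR.
    assert (Hn : 2 <= INR (n0 + k)).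
    { replace 2 with (INR 2) by (simpl; ring). apply le_INR. lia. }
    assert (HDk : INR (D (n0 + k)%nat) <= 2 * INR (n0 + k)%nat).
    { replace 2 with (INR 2) at 1 by (simpl; ring). rewrite <- mult_INR.
      apply le_INR. apply D_le; auto; lia. }
    unfold b. replace (- (a + 1) * ln (INR (n0 + k)))
      with (ln (INR (n0 + k)) + - Re s * ln (INR (n0 + k))) by (unfold a; ring).
    rewrite exp_plus, exp_ln by lra.
    pose proof (exp_pos (- Re s * ln (INR (n0 + k)))). nra. }
  assert (Hb0 : forall k, 0 <= b k).
  { intros k. unfold b. pose proof (exp_pos (- (a + 1) * ln (INR (n0 + k)))). lra. }
  assert (Hpart : forall N, sum_n b N <= 2 / a * (f (INR n0 - 1) - f (INR (n0 + N)))).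
  { assert (Hk : forall k, b k <= 2 / a * (f (INR (n0 + k) - 1) - f (INR (n0 + k)))).
    { intros k. unfold b, f.
      assert (Hn : 2 <= INR (n0 + k)).
      { replace 2 with (INR 2) by (simpl; ring). apply le_INR. lia. }
      pose proof (key a (INR (n0 + k)) Ha Hn).
      replace (2 / a * (exp (- a * ln (INR (n0 + k) - 1)) - exp (- a * ln (INR (n0 + k)))))
        with (2 * ((exp (- a * ln (INR (n0 + k) - 1)) - exp (- a * ln (INR (n0 + k)))) / a))
        by (field; lra).
      apply Rmult_le_compat_l; [lra|]. apply Rmult_le_reg_r with a; auto.
      unfold Rdiv. rewrite Rmult_assoc, Rinv_l by lra. lra. }
    induction N.
    - rewrite sum_O. specialize (Hk 0%nat). rewrite Nat.add_0_r in Hk |- *. exact Hk.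
    - rewrite sum_Sn. change plus with Rplus. specialize (Hk (S N)).
      replace (INR (n0 + S N) - 1) with (INR (n0 + N)) in Hk
        by (rewrite Nat.add_succ_r, S_INR; ring).
      simpl. lra. }
  assert (Hf0 : forall x, 0 <= f x) by (intros; left; apply exp_pos).
  assert (Hbound : forall N, sum_n b N <= B).
  { intros N. rewrite HB. pose proof (Hpart N). pose proof (Hf0 (INR (n0 + N))).
    assert (0 < 2 / a) by (apply Rdiv_lt_0_compat; lra). nra. }
  assert (Hexb : ex_series b).
  { destruct (growing_cv (sum_n b)) as [lb Hlb].
    - intros N. rewrite sum_Sn. change plus with Rplus. pose proof (Hb0 (S N)). simpl. lra.
    - exists B. intros y [N ->]. apply Hbound.
    - exists lb. apply is_lim_seq_Reals in Hlb. exact Hlb. }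
  destruct (ex_series_le (dterm D n0 s) b Hnorm Hexb) as [l Hl].
  exists l. split; [exact Hl|]. fold B.
  assert (Hsn : forall N, norm (sum_n (dterm D n0 s) N) <= B).
  { intros N. eapply Rle_trans; [|apply (Hbound N)].
    induction N.
    - rewrite !sum_O. apply Hnorm.
    - rewrite !sum_Sn. eapply Rle_trans; [apply (Cmod_triangle (sum_n (dterm D n0 s) N) (dterm D n0 s (S N)))|].
      change (norm (sum_n (dterm D n0 s) N)) with (Cmod (sum_n (dterm D n0 s) N)) in IHN.
      change (norm (dterm D n0 s (S N))) with (Cmod (dterm D n0 s (S N))) in Hnorm.
      change plus with Rplus. pose proof (Hnorm (S N)) as HH. change (norm (dterm D n0 s (S N))) with (Cmod (dterm D n0 s (S N))) in HH. simpl. lra. }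
  assert (Hlim : is_lim_seq (fun N => norm (sum_n (dterm D n0 s) N)) (norm l)).
  { unfold is_lim_seq. eapply filterlim_comp; [exact Hl|]. apply filterlim_norm. }
  pose proof (is_lim_seq_le _ (fun _ => B) _ _ Hsn Hlim (is_lim_seq_const B)).
  simpl in H. exact H.
Qed.
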